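(* Let $k$ and $M$ be positive integers, and let $M=p_{1}^{e_{1}}p_{2}^{e_{2}}\cdots p_{l}^{e_{l}}$ be the prime factorization of $M$, where $p_1,\dots,p_l$ are distinct primes. For any integers $n,m\geq \max\{e_j \mid 1\leq j\leq l\}$ satisfying $n\equiv m \pmod{\varphi(M)}$, we have \[ L(k,n)\equiv L(k,m)\pmod{M}. \]
   Context: A matrix with entries in $\{0,1\}$ is called lonesum if it is uniquely determined (among $0$-$1$ matrices of the same size) by its row sum vector and column sum vector. For positive integers $k,n$, $L(k,n)$ denotes the number of lonesum matrices of size $k\times n$. $\varphi$ denotes Euler's totient function. *)

(* Defs.v *)
From mathcomp Require Import all_boot all_algebra.
Set Implicit Arguments. Unset Strict Implicit. Unset Printing Implicit Defensive.

Definition rowsum k n (A : 'M[bool]_(k, n)) (i : 'I_k) : nat := \sum_(j < n) A i j.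
Definition colsum k n (A : 'M[bool]_(k, n)) (j : 'I_n) : nat := \sum_(i < k) A i j.

Definition lonesum k n (A : 'M[bool]_(k, n)) : bool :=
  [forall B : 'M[bool]_(k, n),
     ([forall i, rowsum B i == rowsum A i] && [forall j, colsum B j == colsum A j])
     ==> (B == A)].

Definition L (k n : nat) : nat := #|[pred A : 'M[bool]_(k, n) | lonesum A]|.

Definition max_exp (M : nat) : nat := \max_(p <- primes M) logn p M.

(* Main.v *)
Require Import Defs.
From mathcomp Require Import all_boot all_algebra.
From mathcomp Require Import all_fingroup cyclic.
From mathcomp Require Import zify ring lra.
Set Implicit Arguments. Unset Strict Implicit. Unset Printing Implicit Defensive.
Import GRing.Theory Num.Theory.


Lemma pow_cong_le M n m a : 0 < M -> 0 < n -> n <= m ->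
  max_exp M <= n -> totient M %| m - n -> a ^ n = a ^ m %[mod M].
Proof.
move=> M0 n0 nm en dv.
case: (posnP a) => [->|a0]; first by rewrite !exp0n ?(leq_trans n0 nm).
apply/eqP; rewrite eq_sym eqn_mod_dvd ?leq_pexp2l //.
case: (posnP (a ^ m - a ^ n)) => [->|d0]; first by rewrite dvdn0.
apply/(dvdn_partP _ M0) => p; rewrite mem_primes => /and3P[pp _ pM].
rewrite p_part; set e := logn p M.
have ee : e <= n.
  apply: leq_trans en; rewrite /max_exp.
  by apply: (@leq_bigmax_seq _ (primes M) xpredT (fun p => logn p M) p) => //; rewrite mem_primes pp M0.
rewrite -eqn_mod_dvd ?leq_pexp2l //.
have [pa|npa] := boolP (p %| a).
  have h k : e <= k -> a ^ k = 0 %[mod p ^ e].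
    move=> ek; apply/eqP; rewrite mod0n; apply/eqP.
    apply/eqP; apply: (dvdn_trans (dvdn_exp2l p ek)); exact: dvdn_exp2r.
  by rewrite h ?(leq_trans ee) // h.
have cop : coprime a (p ^ e) by rewrite coprimeXr // coprime_sym prime_coprime.
have tdiv : totient (p ^ e) %| m - n.
  apply: dvdn_trans dv.
  rewrite -(partnC p M0) totient_coprime ?coprime_partC //.
  by rewrite p_part dvdn_mulr.
case/dvdnP: tdiv => q hq.
have -> : m = n + (m - n) by rewrite subnKC.
rewrite expnD hq [q * _]mulnC expnM -modnMmr -modnXm Euler_exp_totient //.
by rewrite modnXm exp1n modnMmr muln1.
Qed.



Section Char.
Variables k n : nat.
Implicit Types A B : 'M[bool]_(k, n).

Definition colf A : {ffun 'I_n -> {set 'I_k}} := [ffun j => [set i | A i j]].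
Definition chainF (F : {ffun 'I_n -> {set 'I_k}}) : bool :=
  [forall j, forall j', (F j \subset F j') || (F j' \subset F j)].

Lemma colfE A i j : (i \in colf A j) = A i j.
Proof. by rewrite ffunE inE. Qed.

Lemma rowsum_card A a : rowsum A a = #|[set b | A a b]|.
Proof.
rewrite /rowsum -sum1_card [RHS]big_mkcond /=; apply: eq_bigr => j _.
by rewrite inE; case: (A a j).
Qed.

Definition tt_ A b := #|[set b' | colf A b \subset colf A b']|.

Lemma key A a b : chainF (colf A) -> A a b = (tt_ A b <= rowsum A a).
Proof.
move=> /forallP ch; rewrite rowsum_card /tt_.
case Aab: (A a b).
  apply/esym/subset_leq_card/subsetP => b'; rewrite !inE => /subsetP H.
  by rewrite -colfE; apply: H; rewrite colfE.
apply/esym/negbTE; rewrite -ltnNge; apply: proper_card; rewrite properE.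
apply/andP; split.
  apply/subsetP => b'; rewrite !inE => Ab'.
  have /forallP/(_ b') := ch b; case/orP => // /subsetP H.
  by move: (H a); rewrite !colfE Ab' Aab => /(_ isT).
apply/subsetPn; exists b; first by rewrite inE subxx.
by rewrite inE Aab.
Qed.

Lemma term_prop (y x : bool) (r t : nat) : x = (t <= r) ->
  (0 <= ((x : nat)%:Z - (y : nat)%:Z) * (r%:Z * 2 + 1 - t%:Z * 2))%R /\
  (((x : nat)%:Z - (y : nat)%:Z) * (r%:Z * 2 + 1 - t%:Z * 2) = 0 -> x = y)%R.
Proof.
case: x; case: y => /= e; split => //; try lia.
Qed.


Lemma sumZ (I : finType) (P : pred I) (F : I -> nat) :
  (Posz (\sum_(i | P i) F i)%N = \sum_(i | P i) Posz (F i))%R.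
Proof. exact: (big_morph Posz PoszD (erefl _)). Qed.

Lemma chain_lonesum A : chainF (colf A) -> lonesum A.
Proof.
move=> ch; apply/forallP => B; apply/implyP => /andP[/forallP hr /forallP hc].
apply/eqP/matrixP => a b.
pose w a b : int := ((rowsum A a)%:Z * 2 + 1 - (tt_ A b)%:Z * 2)%R.
pose d a b : int := ((A a b : nat)%:Z - (B a b : nat)%:Z)%R.
have tp a b := @term_prop (B a b) _ _ _ (@key A a b ch).
have S0 : (\sum_a \sum_b d a b * w a b = 0)%R.
  have -> : (\sum_a \sum_b d a b * w a b =
     \sum_a ((rowsum A a)%:Z * 2 + 1) * \sum_b d a b -
     \sum_b (tt_ A b)%:Z * 2 * \sum_a d a b)%R.
    have E2 : (\sum_b (tt_ A b)%:Z * 2 * \sum_a d a b =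
        \sum_a \sum_b d a b * ((tt_ A b)%:Z * 2))%R.
      rewrite [RHS]exchange_big /=; apply: eq_bigr => b' _.
      by rewrite mulr_sumr /=; apply: eq_bigr => a' _; rewrite mulrC.
    rewrite E2 -sumrB; apply: eq_bigr => a' _.
    rewrite mulr_sumr -sumrB; apply: eq_bigr => b' _.
    by rewrite /w; ring.
  rewrite big1 ?big1 ?subrr // => [b' _|a' _].
    rewrite /d sumrB -!sumZ; have := hc b'; rewrite /colsum => /eqP ->.
    by rewrite subrr mulr0.
  rewrite /d sumrB -!sumZ; have := hr a'; rewrite /rowsum => /eqP ->.
  by rewrite subrr mulr0.
have := (psumr_eq0P _) S0 => /(_ _) H.
have H1 : (\sum_b d a b * w a b = 0)%R.
  apply: H => // a' _; apply: sumr_ge0 => b' _; exact: (tp a' b').1.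
have := (psumr_eq0P _) H1 => /(_ _) H2.
apply/esym/(tp a b).2/H2 => // b' _; exact: (tp a b').1.
Qed.

Lemma lonesum_chain A : lonesum A -> chainF (colf A).
Proof.
move=> ls; apply/forallP => b; apply/forallP => b'.
apply/negPn/negP => /norP[/subsetPn[a]]; rewrite !colfE => Aab nAab'.
case/subsetPn => a'; rewrite !colfE => Aa'b' nAa'b.
have ab : a != a' by apply: contraNneq nAa'b => <-.
have bb : b != b' by apply: contraNneq nAab' => <-.
pose B : 'M[bool]_(k, n) := (\matrix_(x, y) if (x == a) || (x == a') then A x (tperm b b' y) else A x y)%R.
have BE x y : B x y = if (y == b) || (y == b') then A (tperm a a' x) y else A x y.
  rewrite mxE.
  have [->|xa] := eqVneq x a; have [->|ya] := eqVneq y b => /=.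
  - by rewrite tpermL tpermL (negbTE nAab') (negbTE nAa'b).
  - have [->|yb'] := eqVneq y b'; first by rewrite tpermR tpermL Aab Aa'b'.
    by rewrite tpermD // eq_sym.
  - have [->|xa'] := eqVneq x a'; first by rewrite /= tpermL tpermR Aab Aa'b'.
    by rewrite /= tpermD // eq_sym.
  - have [->|xa'] := eqVneq x a'; have [->|yb'] := eqVneq y b' => //=.
    + by rewrite tpermR tpermR (negbTE nAab') (negbTE nAa'b).
    + by rewrite tpermD // eq_sym.
    + by rewrite tpermD // eq_sym.
have := forallP ls B.
have -> : [forall i, rowsum B i == rowsum A i].
  apply/forallP => x; apply/eqP; rewrite /rowsum.
  have [h|h] := boolP ((x == a) || (x == a')); last first.
    by under eq_bigr do rewrite mxE (negbTE h).
  under eq_bigr do rewrite mxE h /=.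
  by rewrite [RHS](reindex_inj (@perm_inj _ (tperm b b'))).
have -> : [forall j, colsum B j == colsum A j].
  apply/forallP => y; apply/eqP; rewrite /colsum.
  have [h|h] := boolP ((y == b) || (y == b')); last first.
    by under eq_bigr do rewrite BE (negbTE h).
  under eq_bigr do rewrite BE h /=.
  by rewrite [RHS](reindex_inj (@perm_inj _ (tperm a a'))).
move=> /= /eqP /matrixP /(_ a b); rewrite mxE eqxx /= tpermL.
by rewrite Aab (negbTE nAab').
Qed.

Lemma lonesum_chainE A : lonesum A = chainF (colf A).
Proof. by apply/idP/idP; [apply: lonesum_chain | apply: chain_lonesum]. Qed.
End Char.


Section IE.
Local Open Scope ring_scope.
Variable U : finType.

Lemma alt_sum (A S : {set U}) :
  \sum_(X : {set U} | (A \subset X) && (X \subset S)) (-1) ^+ #|S :\: X| =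
  ((A == S) : nat)%:R :> int.
Proof.
have [->|AS] := eqVneq A S.
  rewrite (big_pred1 S) ?setDv ?cards0 ?expr0 //= => X.
  by rewrite -eqEsubset eq_sym.
have [sAS|nsAS] := boolP (A \subset S); last first.
  rewrite big_pred0 // => X; apply/negP => /andP[h1 h2].
  by rewrite (subset_trans h1 h2) in nsAS.
have : ~~ (S \subset A) by apply: contraNN AS => h; rewrite eqEsubset sAS h.
case/subsetPn => x xS xA.
pose g (X : {set U}) := if x \in X then X :\ x else x |: X.
have gK : involutive g.
  move=> X; rewrite /g; have [xX|xX] := boolP (x \in X).
    by rewrite !inE eqxx /= setD1K.
  by rewrite !inE eqxx /= setU1K.
have agree X y : y != x -> (y \in g X) = (y \in X).
  by move=> yx; rewrite /g; case: ifP => _; rewrite !inE (negbTE yx).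
have gx X : (x \in g X) = (x \notin X).
  by rewrite /g; case: ifP => xX; rewrite !inE eqxx ?xX.
have sub1 X : (A \subset g X) = (A \subset X).
  apply/subsetP/subsetP => h y yA; have yx : y != x by apply: contraNneq xA => <-.
    by rewrite -(agree X y yx) h.
  by rewrite (agree X y yx) h.
have sub2 X : (g X \subset S) = (X \subset S).
  apply/subsetP/subsetP => h y yin; have [->//|yx] := eqVneq y x.
    by apply: h; rewrite (agree X y yx).
  by apply: h; rewrite (agree X y yx) in yin.
have cardE X : #|S :\: X| = ((x \notin X) + #|(S :\: X) :\ x|)%N.
  by rewrite (cardsD1 x) !inE xS andbT.
have sgn X : (-1) ^+ #|S :\: g X| = - (-1) ^+ #|S :\: X| :> int.
  rewrite cardE [in RHS]cardE gx negbK.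
  have -> : (S :\: g X) :\ x = (S :\: X) :\ x.
    by apply/setP => y; rewrite !inE; case: eqVneq => //= yx; rewrite agree.
  by case: (x \in X); rewrite !exprD /= ?expr1 ?expr0 ?mulN1r ?mul1r ?opprK.
set s := \sum_(X | _) _.
have : s = - s.
  rewrite /s [LHS](reindex_inj (inv_inj gK)) /= -sumrN.
  by apply: eq_big => X; rewrite ?sub1 ?sub2 // => _; rewrite sgn.
by rewrite /=; lia.
Qed.

Definition imF (D : finType) (F : {ffun D -> U}) : {set U} := [set F d | d : D].

Lemma imF_sub (D : finType) (F : {ffun D -> U}) (X : {set U}) :
  (imF F \subset X) = (F \in ffun_on X).
Proof.
apply/subsetP/ffun_onP => h.
  by move=> d; apply: h; apply: imset_f.
by move=> y /imsetP[d _ ->].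
Qed.

Lemma count_ffun (D : finType) (P : pred {set U}) :
  (#|[pred F : {ffun D -> U} | P (imF F)]|)%:R =
  \sum_(S : {set U} | P S) \sum_(X : {set U} | X \subset S)
      (-1) ^+ #|S :\: X| * (#|X| ^ #|D|)%:R :> int.
Proof.
have -> : (#|[pred F : {ffun D -> U} | P (imF F)]|)%:R =
    \sum_(F : {ffun D -> U}) ((P (imF F) : nat)%:R : int).
  rewrite -sumr_const big_mkcond /=; apply: eq_bigr => F _.
  by rewrite inE; case: (P _).
have -> : \sum_(F : {ffun D -> U}) ((P (imF F) : nat)%:R : int) =
  \sum_(F : {ffun D -> U}) \sum_(S : {set U} | P S)
     \sum_(X : {set U} | (imF F \subset X) && (X \subset S)) (-1) ^+ #|S :\: X|.
  apply: eq_bigr => F _.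
  under eq_bigr do rewrite alt_sum.
  rewrite big_mkcond (bigD1 (imF F)) //= eqxx big1 ?addr0.
    by case: (P _).
  by move=> S /negbTE; rewrite eq_sym => ->; case: (P S).
rewrite exchange_big /=; apply: eq_bigr => S _.
under eq_bigr do rewrite big_mkcond /=.
rewrite exchange_big /= [RHS]big_mkcond /=; apply: eq_bigr => X _.
have [XS|XS] := boolP (X \subset S); last first.
  by rewrite big1 // => F _; rewrite andbF.
rewrite -card_ffun_on -mulr_natr.
rewrite -sumr_const -big_mkcond /= mulr_sumr mulr1.
rewrite mulr_sumr; under [RHS]eq_bigr do rewrite mulr1.
by apply: eq_bigl => F; rewrite andbT imF_sub.
Qed.
End IE.


Lemma pow_cong M n m a : 0 < M -> 0 < n -> 0 < m ->
  max_exp M <= n -> max_exp M <= m -> n = m %[mod totient M] ->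
  a ^ n = a ^ m %[mod M].
Proof.
move=> M0 n0 m0 en em nm.
have [le|lt] := leqP n m.
  apply: pow_cong_le => //; rewrite -eqn_mod_dvd //; exact/eqP/esym.
apply/esym; apply: pow_cong_le => //; first exact: ltnW.
rewrite -eqn_mod_dvd ?(ltnW lt) //; exact/eqP.
Qed.

Definition isch k (S : {set {set 'I_k}}) : bool :=
  [forall x in S, forall y in S, (x \subset y) || (y \subset x)].

Lemma chainF_isch k n (F : {ffun 'I_n -> {set 'I_k}}) : chainF F = isch (imF F).
Proof.
apply/forallP/forall_inP => h.
  move=> x /imsetP[j _ ->]; apply/forall_inP => y /imsetP[j' _ ->].
  exact: (forallP (h j)).
move=> j; apply/forallP => j'.
have mi i : F i \in imF F by apply/imsetP; exists i.
by have /forall_inP := h _ (mi j); apply; apply: mi.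
Qed.

Lemma L_count k n : L k n = #|[pred F : {ffun 'I_n -> {set 'I_k}} | isch (imF F)]|.
Proof.
rewrite /L.
have -> : #|[pred A : 'M[bool]_(k, n) | lonesum A]| =
          #|[pred A : 'M[bool]_(k, n) | isch (imF (colf A))]|.
  by apply: eq_card => A; rewrite !inE lonesum_chainE chainF_isch.
pose mxf (F : {ffun 'I_n -> {set 'I_k}}) : 'M[bool]_(k, n) := (\matrix_(i, j) (i \in F j))%R.
have K1 : cancel (@colf k n) mxf.
  by move=> A; apply/matrixP => i j; rewrite mxE colfE.
have K2 : cancel mxf (@colf k n).
  by move=> F; apply/ffunP => j; apply/setP => i; rewrite colfE mxE.
rewrite -!sum1_card.
rewrite [RHS](reindex (@colf k n)) /=; last exact: onW_bij (Bijective K1 K2).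
by apply: eq_bigl => A; rewrite !inE.
Qed.

Section Final.
Local Open Scope ring_scope.

Definition G k n : int := \sum_(S : {set {set 'I_k}} | isch S) \sum_(X : {set {set 'I_k}} | X \subset S)
      (-1) ^+ #|S :\: X| * (#|X| ^ n)%:R.

Lemma L_G k n : (L k n)%:R = G k n.
Proof. by rewrite L_count count_ffun card_ord. Qed.

End Final.

Theorem theorem2p4 (k M n m : nat) :
  0 < k -> 0 < M -> 0 < n -> 0 < m ->
  max_exp M <= n -> max_exp M <= m ->
  n = m %[mod totient M] ->
  L k n = L k m %[mod M].
Proof.
move=> k0 M0 n0 m0 en em nm.
have D : (M%:Z %| ((L k n)%:R - (L k m)%:R)%R)%Z.
  rewrite !L_G /G -sumrB; apply: rpred_sum => S _.
  rewrite -sumrB; apply: rpred_sum => X _.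
  rewrite -mulrBr; apply: dvdz_mull.
  rewrite !natz -eqz_mod_dvd !modz_nat; apply/eqP; congr Posz.
  exact: pow_cong.
move: D; rewrite !natz -eqz_mod_dvd !modz_nat => /eqP [].
done.
Qed.
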